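(* Let $m\ge0$ be an integer and write $s_n=s_n^{(1,m+2)}$. Then for all $n\ge0$, \[ s_{n+m+2}^2-1=\sum_{k=0}^n\left\{s_k^2+2\sum_{i=0}^k P_{k+m+1-i}^{\{-2,-1,m\}}s_i^2\right\}. \]
   Context: For positive integers $p<q$, $s_n^{(p,q)}$ is defined by $s_n^{(p,q)}=\delta_{0,n}+s_{n-p}^{(p,q)}+s_{n-q}^{(p,q)}$ for $n\ge0$ and $s_n^{(p,q)}=0$ for $n<0$. $\delta_{i,j}$ is $1$ if $i=j$ and $0$ otherwise. For a finite set $W$ of integers, $P_n^W$ is the number of permutations $\pi$ of $\{1,\dots,n\}$ with $\pi(i)-i\in W$ for all $i$ (the permanent of the $n\times n$ $(0,1)$ Toeplitz matrix whose $(i,j)$ entry is $1$ iff $j-i\in W$), with $P_0^W=1$. *)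

(* Defs.v *)
From mathcomp Require Import all_boot all_order all_fingroup all_algebra.
Set Implicit Arguments. Unset Strict Implicit. Unset Printing Implicit Defensive.

(* s_n^{(p,q)} via fuel: s_aux p q f n computes s_n provided f > n and p >= 1.
   s_n = [n == 0] + s_{n-p} + s_{n-q}, with s_j = 0 for j < 0. *)
Fixpoint s_aux (p q fuel n : nat) : nat :=
  match fuel with
  | 0 => 0
  | f.+1 => (n == 0) + (if p <= n then s_aux p q f (n - p) else 0)
                     + (if q <= n then s_aux p q f (n - q) else 0)
  end.

Definition s_pq (p q n : nat) : nat := s_aux p q n.+1 n.

(* P_n^W : number of permutations pi of {0,...,n-1} (equivalently {1..n})
   with pi(i) - i in W for all i. *)
Definition P_W (W : seq int) (n : nat) : nat :=
  #|[set pi : 'S_n | [forall i : 'I_n, ((pi i)%:Z - (i : nat)%:Z)%R \in W]]|.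

(* Main.v *)
Require Import Defs.
From mathcomp Require Import all_boot all_order all_fingroup all_algebra.
From mathcomp Require Import zify.
Import GRing.Theory.
Local Open Scope ring_scope.

Definition ok (W : seq int) (r c : nat) : bool := ((c%:Z - r%:Z)%R \in W).
Definition cnt (W : seq int) (rows cols : seq nat) : nat :=
  count (all2 (ok W) rows) (permutations cols).

Local Open Scope nat_scope.

Lemma cnt_perm W rows c1 c2 : perm_eq c1 c2 -> cnt W rows c1 = cnt W rows c2.
Proof. by move=> /perm_permutations /seq.permP H; rewrite /cnt H. Qed.

Lemma cnt_nil W cols : cnt W [::] cols = (cols == [::]).
Proof.
case: cols => [|c cs]; first by [].
rewrite /cnt /=; apply/eqP; rewrite -/(count _ _) -leqn0 leqNgt -has_count.
apply/hasPn => t; rewrite mem_permutations => /perm_size /=.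
by case: t.
Qed.

Lemma cnt_cons W r rs cols : uniq cols ->
  cnt W (r :: rs) cols = \sum_(c <- cols) ok W r c * cnt W rs (rem c cols).
Proof.
move=> Uc; have [->|ne] := eqVneq cols [::]; first by rewrite big_nil.
have sz : 0 < size cols by case: (cols) ne.
rewrite /cnt (seq.permP (permutationsE sz)) (undup_id Uc).
rewrite count_flatten sumnE !big_map; apply: eq_bigr => x _.
rewrite count_map.
case E: (ok W r x).
  by rewrite mul1n; apply: eq_count => t /=; rewrite E.
rewrite mul0n; apply/eqP; rewrite -leqn0 leqNgt -has_count; apply/hasPn => t _.
by rewrite /= E.
Qed.

Lemma all2_map2 (A B C : Type) (r : B -> C -> bool) (f : A -> B) (g : A -> C) s :
  all2 r (map f s) (map g s) = all (fun x => r (f x) (g x)) s.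
Proof. by elim: s => //= x s ->. Qed.

Lemma bridge W n : P_W W n = cnt W (iota 0 n) (iota 0 n).
Proof.
rewrite /P_W /cnt.
set A := [set pi : 'S_n | _].
pose f := fun pi : 'S_n => [seq val (pi i) | i <- enum 'I_n].
have finj : injective f.
  move=> p1 p2; rewrite /f => /eq_in_map H; apply/permP => i.
  apply/val_inj; exact: (H i (mem_enum _ i)).
have key : forall pi, all2 (ok W) (iota 0 n) (f pi) = [forall i : 'I_n, ok W i (pi i)].
  move=> pi; rewrite /f -val_enum_ord all2_map2.
  apply/allP/forallP => H i; first exact: H (mem_enum _ i).
  by move=> _; exact: H.
have permf : forall pi, perm_eq (f pi) (iota 0 n).
  move=> pi; rewrite /f -val_enum_ord (map_comp val pi); apply: perm_map.
  apply: uniq_perm; [by rewrite map_inj_uniq ?enum_uniq //; exact: perm_inj | exact: enum_uniq|].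
  move=> x; rewrite mem_enum; apply/mapP; exists (perm_inv pi x); first by rewrite mem_enum.
  by rewrite permKV.
rewrite cardE -(size_map f) -size_filter; apply: perm_size; apply: uniq_perm.
- by rewrite map_inj_uniq ?enum_uniq.
- exact: filter_uniq (permutations_uniq _).
move=> t; rewrite mem_filter mem_permutations; apply/mapP/andP.
  case=> pi; rewrite mem_enum inE => Hpi ->; split; first by rewrite key.
  exact: permf.
case=> H1 H2.
have szt : size t = n by rewrite (perm_size H2) size_iota.
have ltt : forall i, i < n -> nth 0 t i < n.
  move=> i lin; have : nth 0 t i \in iota 0 n by rewrite -(perm_mem H2) mem_nth // szt.
  by rewrite mem_iota.
have ut : uniq t by rewrite (perm_uniq H2) iota_uniq.
pose g := fun i : 'I_n => Ordinal (ltt _ (ltn_ord i)).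
have ginj : injective g.
  move=> i j /(congr1 val) /= /eqP; rewrite nth_uniq ?szt // => /eqP; exact: val_inj.
have fpi : f (perm ginj) = t.
  rewrite /f; under eq_map do rewrite permE /=.
  rewrite (map_comp (nth 0 t) val) val_enum_ord -szt.
  exact: (mkseq_nth 0 t).
exists (perm ginj); last by rewrite fpi.
by rewrite mem_enum inE -key fpi.
Qed.

Definition W3 (m : nat) : seq int := [:: (-2)%R; (-1)%R; m%:Z].

Lemma ok3 (m r c : nat) : ok (W3 m) r c = [|| (c.+2 == r), (c.+1 == r) | (c == r + m)].
Proof.
rewrite /ok !inE.
apply/idP/idP.
- case/or3P => /eqP H; apply/or3P; [apply: Or31 | apply: Or32 | apply: Or33]; apply/eqP; lia.
- case/or3P => /eqP H; apply/or3P; [apply: Or31 | apply: Or32 | apply: Or33]; apply/eqP; lia.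
Qed.

Lemma sum_pred1 (s : seq nat) (P : pred nat) x (F : nat -> nat) : uniq s ->
  (forall c, P c = (c == x)) -> \sum_(c <- s) P c * F c = (x \in s) * F x.
Proof.
move=> Us HP; elim: s Us => [|y s IH] /=; first by rewrite big_nil.
case/andP => ys Us; rewrite big_cons IH // HP inE.
have [e|ne] := eqVneq y x; last by rewrite add0n.
by subst y; rewrite (negbTE ys) /= mul0n addn0.
Qed.

Lemma sum_pred0 (s : seq nat) (P : pred nat) (F : nat -> nat) :
  (forall c, c \in s -> P c = false) -> \sum_(c <- s) P c * F c = 0.
Proof. by move=> H; rewrite big1_seq // => c /andP[_ /H ->]. Qed.

Lemma cnt_dead W rows cols c : uniq cols -> c \in cols ->
  (forall r, r \in rows -> ~~ ok W r c) -> cnt W rows cols = 0.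
Proof.
elim: rows cols => [|r rs IH] cols Uc cin H.
  by rewrite cnt_nil; case: (cols) cin.
rewrite cnt_cons //; rewrite big1_seq // => c' /andP[_ c'in].
have [e|ne] := eqVneq c' c.
  by subst c'; rewrite (negbTE (H r (mem_head _ _))).
rewrite (IH _ (rem_uniq _ Uc)) ?muln0 //.
  by rewrite (mem_rem_uniq _ Uc) inE eq_sym ne.
by move=> r' r'in; apply: H; rewrite inE r'in orbT.
Qed.

Lemma cnt3 m r rs cols : uniq cols ->
  cnt (W3 m) (r :: rs) cols =
    \sum_(c <- cols) (c.+2 == r) * cnt (W3 m) rs (rem c cols)
  + \sum_(c <- cols) (c.+1 == r) * cnt (W3 m) rs (rem c cols)
  + \sum_(c <- cols) (c == r + m) * cnt (W3 m) rs (rem c cols).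
Proof.
move=> Uc; rewrite cnt_cons // -!big_split; apply: eq_bigr => c _ /=.
rewrite -!mulnDl ok3; congr (_ * _).
by case: eqP => ?; case: eqP => ?; case: eqP => ? //=; lia.
Qed.

Lemma s_aux_fuel q f f' n : 0 < q -> n < f -> n < f' -> s_aux 1 q f n = s_aux 1 q f' n.
Proof.
elim: f f' n => [|f IH] [|f'] n q0 //= h h'.
congr (_ + _ + _).
  by case: ifP => // h1; apply: IH => //; lia.
by case: ifP => // h1; apply: IH => //; lia.
Qed.

Lemma s_aux_S p q f n : s_aux p q f.+1 n = (n == 0) + (if p <= n then s_aux p q f (n - p) else 0)
  + (if q <= n then s_aux p q f (n - q) else 0).
Proof. by []. Qed.

Definition sv m n := s_pq 1 (m + 2) n.

Lemma sv0 m : sv m 0 = 1.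
Proof. by rewrite /sv /s_pq /= addn2. Qed.

Lemma svS m n : sv m n.+1 = sv m n + (if m + 2 <= n.+1 then sv m (n.+1 - (m + 2)) else 0).
Proof.
rewrite /sv /s_pq s_aux_S add0n subn1 succnK.
congr (_ + _).
by case: ifP => // h; apply: s_aux_fuel => //; lia.
Qed.

Lemma sv_step m L : sv m L.+2 = sv m L.+1 + (if m <= L then sv m (L - m) else 0).
Proof.
rewrite svS; congr (_ + _).
have -> : (m + 2 <= L.+2) = (m <= L) by lia.
case: ifP => // _; congr (sv _ _); lia.
Qed.

Lemma sv_small m n : n <= m.+1 -> sv m n = 1.
Proof.
elim: n => [|n IH] h; first exact: sv0.
rewrite svS IH; last lia.
by case: ifP => //; lia.
Qed.

Fixpoint Gf (m fuel L d : nat) : nat :=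
  match fuel with
  | 0 => 0
  | f.+1 => match L with
            | 0 => (d == 0)
            | L'.+1 => (if d is d'.+1 then Gf m f L' d' else 0)
                       + (if m <= L' then Gf m f (L' - d) (m - d) else 0)
            end
  end.

Definition G m L d := Gf m L.+1 L d.

Lemma Gf_fuel m f f' L d : L < f -> L < f' -> Gf m f L d = Gf m f' L d.
Proof.
elim: f f' L d => [|f IH] [|f'] L d //= h h'.
case: L h h' => [|L] h h' //.
congr (_ + _).
  by case: d => // d; apply: IH; lia.
by case: ifP => // _; apply: IH; lia.
Qed.

Lemma GfS m f L d : Gf m f.+1 L.+1 d = (if d is d'.+1 then Gf m f L d' else 0)
                       + (if m <= L then Gf m f (L - d) (m - d) else 0).
Proof. by []. Qed.

Lemma G0 m d : G m 0 d = (d == 0).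
Proof. by []. Qed.

Lemma GS m L d : G m L.+1 d =
  (if d is d'.+1 then G m L d' else 0) + (if m <= L then G m (L - d) (m - d) else 0).
Proof.
rewrite /G GfS; congr (_ + _).
by case: ifP => // _; apply: Gf_fuel; lia.
Qed.

Lemma G_lt m L d : d <= m -> L < d -> G m L d = 0.
Proof.
elim: L d => [|L IH] d dm Ld; first by rewrite G0; case: d Ld dm.
rewrite GS; case: d dm Ld => [|d] dm Ld //.
rewrite IH; [|lia|lia]; case: ifP => //; lia.
Qed.

Lemma Tsum m L d : d <= m ->
  \sum_(0 <= i < L.+1) G m (L - i) d * sv m i ^ 2 = (d <= L) * (sv m (L - d) * sv m L.+1).
Proof.
elim/ltn_ind: L d => L IH d dm.
case: L IH => [|L] IH.
  rewrite big_nat1 G0 sv0 sv_small //.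
  by case: d dm.
rewrite big_nat_recr //= subnn G0.
have E : \sum_(0 <= i < L.+1) G m (L.+1 - i) d * sv m i ^ 2 =
   \sum_(0 <= i < L.+1) (if d is d'.+1 then G m (L - i) d' else 0) * sv m i ^ 2
 + \sum_(0 <= i < L.+1) (if m <= L - i then G m (L - i - d) (m - d) else 0) * sv m i ^ 2.
  rewrite -big_split; apply: eq_big_nat => i /andP[_ hi].
  by rewrite subSn // GS mulnDl.
have E1 : \sum_(0 <= i < L.+1) (if d is d'.+1 then G m (L - i) d' else 0) * sv m i ^ 2 =
   (if d is d'.+1 then (d' <= L) * (sv m (L - d') * sv m L.+1) else 0).
  case: d dm {E} => [|d'] dm; first by rewrite big1.
  by apply: IH => //; lia.
have E2 : \sum_(0 <= i < L.+1) (if m <= L - i then G m (L - i - d) (m - d) else 0) * sv m i ^ 2 =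
   (m <= L) * ((m - d <= L - d) * (sv m (L - d - (m - d)) * sv m (L - d).+1)).
  case: (leqP m L) => hm; last first.
    rewrite mul0n big1_seq // => i /andP[_]; rewrite mem_index_iota => hi.
    by case: ifP => //; lia.
  rewrite mul1n -(IH (L - d)); [| lia | lia].
  rewrite (big_cat_nat _ (n:=(L - m).+1)) /=; [| lia | lia].
  rewrite [X in _ + X = _]big1_seq ?addn0; last first.
    move=> i /andP[_]; rewrite mem_index_iota => hi.
    by case: ifP => //; lia.
  rewrite [RHS](big_cat_nat _ (n:=(L - m).+1)) /=; [| lia | lia].
  rewrite [X in _ = _ + X]big1_seq ?addn0; last first.
    move=> i /andP[_]; rewrite mem_index_iota => hi.
    by rewrite G_lt ?mul0n //; lia.
  apply: eq_big_nat => i /andP[_ hi].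
  rewrite ifT; last lia.
  by have -> : L - i - d = L - d - i by lia.
rewrite E E1 E2 sv_step.
case: d dm {E E1 E2} => [|d] dm.
  rewrite !subn0 /= mul1n add0n.
  case: leqP => hm /=; rewrite ?mul1n ?mul0n ?add0n ?addn0; nia.
have -> : L.+1 - d.+1 = L - d by lia.
have -> : (d < L.+1) = (d <= L) by lia.
rewrite /= mul0n addn0.
case: (leqP m L) => hm /=; last by rewrite mul0n !addn0.
have -> : m - d.+1 <= L - d.+1 by lia.
have -> : d <= L by lia.
have -> : L - d.+1 - (m - d.+1) = L - m by lia.
have -> : (L - d.+1).+1 = L - d by lia.
rewrite !mul1n; nia.
Qed.

Lemma remI x a n : rem x (iota a n) = filter (predC1 x) (iota a n).
Proof. exact: rem_filter (iota_uniq a n). Qed.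
Lemma remFI x (P : pred nat) a n : rem x (filter P (iota a n)) = filter (predC1 x) (filter P (iota a n)).
Proof. exact: rem_filter (filter_uniq _ (iota_uniq a n)). Qed.

Ltac psolve := apply: uniq_perm; rewrite ?remI ?remFI;
  [by rewrite ?filter_uniq ?iota_uniq | by rewrite ?filter_uniq ?iota_uniq
  | move=> y; rewrite !mem_filter ?mem_iota /=; lia].

Lemma run m x L d : d <= m -> m <= L -> forall j, j <= d ->
  cnt (W3 m) (iota x.+2 L) (rem (x.+1 + m) (rem (x + d) (iota x L.+2))) =
  cnt (W3 m) (iota (x + j).+2 (L - j))
     (filter (fun c => (c != x + d) && (c != x.+1 + m)) (iota (x + j) (L.+2 - j))).
Proof.
move=> dm mL; elim=> [|j IH] jd.
  rewrite addn0 subn0; apply: cnt_perm; psolve.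
rewrite IH; last lia.
set D := filter _ _.
have UD : uniq D by rewrite filter_uniq ?iota_uniq.
have -> : L - j = (L - j.+1).+1 by lia.
rewrite [iota (x + j).+2 _]/= cnt3 //.
have dead : forall c', c' != x + j ->
    cnt (W3 m) (iota (x + j).+3 (L - j.+1)) (rem c' D) = 0.
  move=> c' ne; apply: (@cnt_dead _ _ _ (x + j)); first exact: rem_uniq.
    rewrite remFI !mem_filter mem_iota /=; lia.
  by move=> r; rewrite mem_iota ok3 => hr; lia.
rewrite [X in _ + X](sum_pred1 _ (fun c => c == (x + j).+2 + m) _ _ UD (fun c => erefl)).
rewrite dead ?muln0 ?addn0; last by lia.
rewrite [X in _ + X](sum_pred1 _ (fun c => c.+1 == (x + j).+2) (x + j).+1 _ UD (fun c => erefl)).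
rewrite dead ?muln0 ?addn0; last by lia.
rewrite (sum_pred1 _ (fun c => c.+2 == (x + j).+2) (x + j) _ UD (fun c => erefl)).
have -> : (x + j \in D) by rewrite /D mem_filter mem_iota; lia.
rewrite mul1n addnS; apply: cnt_perm; psolve.
Qed.

Lemma link m L : forall x d, d <= m ->
  cnt (W3 m) (iota x.+1 L) (rem (x + d) (iota x L.+1)) = G m L d.
Proof.
elim/ltn_ind: L => L IH x d dm.
case: L IH => [|L] IH.
  rewrite cnt_nil G0 /=.
  have -> : (x == x + d) = (d == 0) by lia.
  by case: (d == 0).
set C := rem (x + d) (iota x L.+2).
have UC : uniq C by rewrite rem_uniq ?iota_uniq.
rewrite [iota x.+1 _]/= cnt3 // GS.
rewrite (sum_pred1 _ (fun c => c == x.+1 + m) _ _ UC (fun c => erefl)).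
rewrite (sum_pred1 _ (fun c => c.+1 == x.+1) x _ UC (fun c => erefl)).
rewrite sum_pred0; last first.
  by move=> c; rewrite /C remI mem_filter mem_iota /=; lia.
rewrite add0n; congr (_ + _).
  rewrite /C; case: d dm {C UC} => [|d] dm.
    by rewrite remI mem_filter /= addn0 eqxx.
  have -> : x \in rem (x + d.+1) (iota x L.+2) by rewrite remI mem_filter mem_iota /=; lia.
  rewrite mul1n -(IH L (ltnSn _) x.+1 d) //; last lia.
  apply: cnt_perm; psolve.
case: (leqP m L) => hm.
  have -> : x.+1 + m \in C by rewrite /C remI mem_filter mem_iota /=; lia.
  rewrite mul1n (@run m x L d dm hm d (leqnn d)).
  rewrite -(IH (L - d) _ (x + d).+1 (m - d)); [|lia|lia].
  apply: cnt_perm; psolve.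
have -> : x.+1 + m \in C = false by rewrite /C remI mem_filter mem_iota /=; lia.
by [].
Qed.

Lemma P3 m N : P_W (W3 m) N.+1 = (m <= N) * G m N m.
Proof.
have h : cnt (W3 m) (iota 0 N.+1) (iota 0 N.+1) = cnt (W3 m) (0 :: iota 1 N) (iota 0 N.+1) by [].
rewrite bridge h cnt3 ?iota_uniq //.
rewrite (sum_pred1 _ (fun c => c == 0 + m) _ _ (iota_uniq _ _) (fun c => erefl)).
rewrite !sum_pred0 ?add0n //.
rewrite mem_iota add0n -(@link m N 0 m (leqnn m)).
by congr (_ * _); lia.
Qed.

Lemma inner m k : \sum_(i < k.+1) P_W (W3 m) (k + m + 1 - i) * sv m i ^ 2 = sv m k * sv m (k + m + 1).
Proof.
have := @Tsum m (k + m) m (leqnn m).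
rewrite (big_cat_nat _ (n:=k.+1)) //=; last lia.
rewrite [X in _ + X = _]big1_seq ?addn0; last first.
  move=> i /andP[_]; rewrite mem_index_iota => hi.
  by rewrite G_lt ?mul0n //; lia.
have -> : m <= k + m by lia.
have -> : k + m - m = k by lia.
rewrite mul1n addn1 => <-.
rewrite [RHS]big_mkord; apply: eq_bigr => i _; have hi := ltn_ord i.
have -> : (k + m).+1 - i = (k + m - i).+1 by lia.
rewrite P3; have -> : m <= k + m - i by lia.
by rewrite mul1n.
Qed.

Lemma telesc m n : sv m (n + m + 2) ^ 2 = 1 + \sum_(k < n.+1) (sv m k ^ 2 + 2 * (sv m k * sv m (k + m + 1))).
Proof.
elim: n => [|n IH].
  rewrite big_ord_recr big_ord0 /= add0n sv0.
  have -> : m + 2 = m.+2 by lia.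
  have h1 : sv m (m + 1) = 1 by apply: sv_small; lia.
  have h2 : sv m m.+1 = 1 by apply: sv_small; lia.
  by rewrite sv_step leqnn subnn sv0 h1 h2.
rewrite big_ord_recr /= addnA -IH.
have -> : n.+1 + m + 2 = (n + m + 1).+2 by lia.
have -> : n + m + 2 = (n + m + 1).+1 by lia.
have -> : n.+1 + m + 1 = (n + m + 1).+1 by lia.
rewrite sv_step; have -> : m <= n + m + 1 by lia.
have -> : n + m + 1 - m = n.+1 by lia.
nia.
Qed.

Local Open Scope ring_scope.

Theorem mainTheorem7 (m n : nat) :
  ((s_pq 1 (m + 2) (n + m + 2))%:Z ^+ 2 - 1 =
   \sum_(k < n.+1)
     ((s_pq 1 (m + 2) k)%:Z ^+ 2
      + 2 * \sum_(i < k.+1)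
              (P_W [:: -2; -1; m%:Z] (k + m + 1 - i))%:Z
              * (s_pq 1 (m + 2) i)%:Z ^+ 2))%R.
Proof.
change (((sv m (n + m + 2))%:Z ^+ 2 - 1 =
   \sum_(k < n.+1)
     ((sv m k)%:Z ^+ 2
      + 2 * \sum_(i < k.+1)
              (P_W (W3 m) (k + m + 1 - i))%:Z
              * (sv m i)%:Z ^+ 2))%R).
have E : forall k, (\sum_(i < k.+1) (P_W (W3 m) (k + m + 1 - i))%:Z * (sv m i)%:Z ^+ 2)%R
             = ((sv m k * sv m (k + m + 1))%N)%:Z.
  move=> k; rewrite -inner (big_morph Posz PoszD (erefl _)).
  by apply: eq_bigr => i _; rewrite expr2 -!PoszM mulnn.
under eq_bigr do rewrite E.
rewrite expr2 -PoszM mulnn telesc PoszD addrAC subrr add0r.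
rewrite (big_morph Posz PoszD (erefl _)); apply: eq_bigr => k _.
by rewrite PoszD expr2 -PoszM mulnn PoszM.
Qed.
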